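(* Let $f\in\mathcal{R}$ be nonzero and suppose that for every integer $p\ge2$ there is $\lambda_p\neq0$ with $U_pf=\lambda_pf$. Then all poles of $f$ equal $1$ (i.e. the level of $f$ is $L=1$), and \[f(x)=C\,\Big(x\frac{d}{dx}\Big)^k\Big(\frac{1}{1-x}\Big)\] for some $k\in\mathbb{N}=\{0,1,2,\dots\}$ and $C\in\mathbb{C}$. Consequently $\lambda_p=p^k$ for every $p$.
   Context: $\mathcal{R}$ denotes the real vector space of rational functions $f(x)=A(x)/B(x)$ with $A,B\in\mathbb{R}[x]$, $B(0)\neq 0$ and $\deg A<\deg B$. For $f\in\mathcal{R}$ with Taylor expansion $f(x)=\sum_{n\ge0}a_nx^n$ at $0$ and a positive integer $p$, the Hecke operator $U_p$ is defined by $U_pf(x)=\sum_{n\ge 0}a_{pn}x^n$. If all poles of $f$ are roots of unity, the level of $f$ is the least common multiple of the orders of these roots of unity. *)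

(* Defs.v *)
From mathcomp Require Import all_boot all_algebra all_reals.
From mathcomp Require Export complex.
Set Implicit Arguments. Unset Strict Implicit. Unset Printing Implicit Defensive.
Import GRing.Theory Num.Theory.
Local Open Scope ring_scope.

Section RatFun.
Variable R : realType.

(* A rational function f = A/B in the space \mathcal{R} is represented by the
   pair of polynomials (A, B) with B.[0] != 0 and deg A < deg B.            *)

(* First n+1 Taylor coefficients at 0 of A/B (B.[0] != 0), computed from
   A = B * (\sum_n a_n x^n), i.e. \sum_{i<=n} B_i a_{n-i} = A_n.            *)
Fixpoint taylor_seq (A B : {poly R}) (n : nat) : seq R :=
  if n is m.+1 then
    let s := taylor_seq A B m in
    rcons s ((A`_n - \sum_(i < n) B`_(n - i) * s`_i) / B`_0)
  else [:: A`_0 / B`_0].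

Definition taylor (A B : {poly R}) (n : nat) : R := (taylor_seq A B n)`_n.

(* The operator x d/dx on rational functions given as (numerator, denominator):
   x (A/B)' = x (A' B - A B') / B^2. *)
Definition theta (f : {poly R} * {poly R}) : {poly R} * {poly R} :=
  ('X * (f.1^`() * f.2 - f.1 * f.2^`()), f.2 ^+ 2).

Definition theta_geom (k : nat) : {poly R} * {poly R} :=
  iter k theta (1, 1 - 'X).

Definition is_pole (A B : {poly R}) (z : R[i]) : bool :=
  root (map_poly (real_complex R) (B %/ gcdp A B)) z.

End RatFun.

(* Main.v *)
Require Import Defs.
From mathcomp Require Import all_boot all_algebra all_reals.
From mathcomp Require Import complex.
From mathcomp Require Import zify ring.
From Stdlib Require Import Classical.
Import GRing.Theory Num.Theory.
Local Open Scope ring_scope.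


Section Series.
Variable F : fieldType.
Implicit Types (N D p q r : {poly F}) (s t : nat -> F).

Definition srel (N D : {poly F}) (s : nat -> F) :=
  forall n, N`_n = \sum_(i < n.+1) D`_i * s (n - i)%N.

Definition agree (n : nat) (p q : {poly F}) := forall j, (j <= n)%N -> p`_j = q`_j.

Lemma agree_mul n p q r : agree n p q -> agree n (p * r) (q * r).
Proof.
move=> H j hj; rewrite !coefM; apply: eq_bigr => i _; rewrite H //.
by have := ltn_ord i; lia.
Qed.

Lemma agree_mulr n p q r : agree n p q -> agree n (r * p) (r * q).
Proof. by move=> H; rewrite ![r * _]mulrC; apply: agree_mul. Qed.

Lemma agree_sub n p q p' q' : agree n p q -> agree n p' q' -> agree n (p - p') (q - q').
Proof. by move=> H H' j hj; rewrite !coefB H ?H'. Qed.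

Lemma agree_xd n p q : agree n p q -> agree n ('X * p^`()) ('X * q^`()).
Proof.
move=> H [|j] hj; rewrite !coefXM //= !coef_deriv H //.
Qed.

Lemma agree_coef n p q : agree n p q -> p`_n = q`_n.
Proof. by move=> H; apply: H. Qed.

Lemma srel_agree N D s n : srel N D s -> agree n N (D * \poly_(i < n.+1) s i).
Proof.
move=> H j hj; rewrite H coefM; apply: eq_bigr => i _; rewrite coef_poly.
by rewrite ltnS (leq_trans (leq_subr _ _) hj).
Qed.

Lemma srel_of_agree N D s : (forall n, N`_n = (D * \poly_(i < n.+1) s i)`_n) -> srel N D s.
Proof.
move=> H n; rewrite H coefM; apply: eq_bigr => i _; rewrite coef_poly.
by rewrite ltnS leq_subr.
Qed.

Lemma srel_uniq N D s t : D`_0 != 0 -> srel N D s -> srel N D t -> forall n, s n = t n.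
Proof.
move=> D0 Hs Ht n; elim: n {-2}n (leqnn n) => [|m IH] n hn.
  move: hn; rewrite leqn0 => /eqP ->.
  have := Hs 0%N; rewrite Ht !big_ord1 /= => /(mulfI D0); done.
have E2 : \sum_(i < n) D`_(bump 0 i) * t (n - bump 0 i)%N =
          \sum_(i < n) D`_(bump 0 i) * s (n - bump 0 i)%N.
  apply: eq_bigr => i _; rewrite IH //.
  by have := ltn_ord i; rewrite /bump /=; lia.
have := Hs n; rewrite Ht !big_ord_recl subn0 E2 => /addIr /(mulfI D0) //.
Qed.

Lemma srel_eq N1 D1 N2 D2 s : srel N1 D1 s -> srel N2 D2 s -> N1 * D2 = N2 * D1.
Proof.
move=> H1 H2; apply/polyP => n.
pose S := \poly_(i < n.+1) s i.
have A1 := srel_agree _ _ _ n H1; have A2 := srel_agree _ _ _ n H2.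
rewrite (agree_coef _ _ _ (agree_mul _ _ _ D2 A1)) (agree_coef _ _ _ (agree_mul _ _ _ D1 A2)).
rewrite -/S; suff -> : D1 * S * D2 = D2 * S * D1 by []; ring.
Qed.

Lemma srel_theta N D s : srel N D s ->
  srel ('X * (N^`() * D - N * D^`())) (D ^+ 2) (fun n => n%:R * s n).
Proof.
move=> H; apply: srel_of_agree => n.
pose S := \poly_(i < n.+1) s i.
have -> : \poly_(i < n.+1) (i%:R * s i) = 'X * S^`().
  apply/polyP => j; rewrite coef_poly coefXM /S.
  case: j => [|j]; first by rewrite mul0r.
  rewrite /= coef_deriv coef_poly; case: ifP => _; last by rewrite mul0rn.
  by rewrite mulr_natl.
have A := srel_agree _ _ _ n H; rewrite -/S in A.
have -> : 'X * (N^`() * D - N * D^`()) = ('X * N^`()) * D - N * ('X * D^`()).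
  by ring.
rewrite (agree_coef _ _ _ (agree_sub _ _ _ _ _ (agree_mul _ _ _ D (agree_xd _ _ _ A)) (agree_mul _ _ _ ('X * D^`()) A))).
suff -> : ('X * (D * S)^`()) * D - D * S * ('X * D^`()) = D ^+ 2 * ('X * S^`()) by []; rewrite derivM; ring.
Qed.

Lemma srel_scale N D s c : srel N D s -> srel (c *: N) D (fun n => c * s n).
Proof.
by move=> H n; rewrite coefZ H mulr_sumr; apply: eq_bigr => i _; rewrite mulrCA.
Qed.

Lemma srel_geom : srel 1 (1 - 'X) (fun _ => 1).
Proof.
case=> [|n]; first by rewrite big_ord1 !coefE /= mulr1 subr0.
rewrite !big_ord_recl big1 => [|i _]; last by rewrite coefB coefC coefX /= subrr mul0r.
by rewrite !coefE /= !mulr1 addr0 sub0r subr0 subrr.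
Qed.

End Series.
Arguments srel {F}.
Arguments srel_uniq {F N D s t}.
Arguments srel_eq {F N1 D1 N2 D2 s}.
Arguments srel_theta {F N D s}.
Arguments srel_scale {F N D s}.
Arguments srel_geom {F}.

Section Ann.
Variable F : fieldType.
Variable a : nat -> F.
Implicit Types (g h p q : {poly F}).

Definition phi g := \sum_(i < size g) g`_i * a i.

Lemma sum_trunc (G : nat -> F) m M : (m <= M)%N -> (forall l, (m <= l)%N -> G l = 0) ->
  \sum_(l < m) G l = \sum_(l < M) G l.
Proof.
move=> hm H; rewrite (big_ord_widen M G hm) big_mkcond /=; apply: eq_bigr => i _.
by case: ifP => // /negbT; rewrite -leqNgt => /H ->.
Qed.

Lemma phi_bound g m : (size g <= m)%N -> phi g = \sum_(i < m) g`_i * a i.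
Proof.
move=> hm; apply: (sum_trunc (fun i => g`_i * a i)) => // l hl; rewrite nth_default ?mul0r //.
Qed.

Lemma phi0 : phi 0 = 0.
Proof. by rewrite /phi size_poly0 big_ord0. Qed.

Lemma phiD g h : phi (g + h) = phi g + phi h.
Proof.
pose m := maxn (size g) (size h).
rewrite !(phi_bound _ m) ?leq_maxl ?leq_maxr ?(leq_trans (size_polyD _ _)) //.
by rewrite -big_split; apply: eq_bigr => i _; rewrite coefD mulrDl.
Qed.

Lemma phiZ c g : phi (c *: g) = c * phi g.
Proof.
rewrite (phi_bound _ (size g)) ?size_scale_leq // /phi mulr_sumr.
by apply: eq_bigr => i _; rewrite coefZ mulrA.
Qed.

Lemma phiN g : phi (- g) = - phi g.
Proof. by rewrite -scaleN1r phiZ mulN1r. Qed.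

Lemma phiB g h : phi (g - h) = phi g - phi h.
Proof. by rewrite phiD phiN. Qed.

Lemma phi_sum (I : Type) (r : seq I) (P : pred I) (G : I -> {poly F}) :
  phi (\sum_(i <- r | P i) G i) = \sum_(i <- r | P i) phi (G i).
Proof. exact: (big_morph phi phiD phi0). Qed.

Lemma phiXn n : phi 'X^n = a n.
Proof.
rewrite /phi size_polyXn big_ord_recr /= big1 ?add0r => [|i _].
  by rewrite coefXn eqxx mul1r.
by rewrite coefXn ltn_eqF ?mul0r.

Qed.

Lemma poly_decomp g : g = \sum_(i < size g) g`_i *: 'X^i.
Proof. by rewrite -poly_def coefK. Qed.

Lemma phi_lin n m (c : nat -> F) (e : nat -> nat) :
  phi ('X^n * \sum_(j < m) c j *: 'X^(e j)) = \sum_(j < m) c j * a (n + e j).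
Proof.
rewrite mulr_sumr phi_sum; apply: eq_bigr => j _.
by rewrite -scalerAr -exprD phiZ phiXn.
Qed.

Definition ann h := forall n, phi ('X^n * h) = 0.

Lemma ann_mul h g : ann h -> phi (g * h) = 0.
Proof.
move=> H; rewrite (poly_decomp g) mulr_suml phi_sum big1 // => i _.
by rewrite -scalerAl phiZ H mulr0.
Qed.

Lemma ann_mull h g : ann h -> ann (g * h).
Proof. by move=> H n; rewrite mulrA ann_mul. Qed.

Lemma ann_sub g h : ann g -> ann h -> ann (g - h).
Proof. by move=> Hg Hh n; rewrite mulrBr phiB Hg Hh subrr. Qed.

Lemma ann_scale c h : ann h -> ann (c *: h).
Proof. by move=> H n; rewrite -scalerAr phiZ H mulr0. Qed.

Lemma ann_min h : ann h -> h != 0 ->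
  exists mu, [/\ ann mu, mu != 0 & forall g, ann g -> mu %| g].
Proof.
move=> Hh hn; have [n hs] : exists n, (size h <= n)%N by exists (size h).
elim: n h hs Hh hn => [|n IH] q hq Aq nq.
  by move: hq; rewrite leqn0 size_poly_eq0 (negbTE nq).
case: (classic (forall g, ann g -> q %| g)) => [Hall|]; first by exists q.
move=> Hn; have [g Hg] := not_all_ex_not _ _ Hn.
have [Ag ndv] := imply_to_and _ _ Hg.
have r0 : g %% q != 0 by apply/eqP => /modp_eq0P.

apply: (IH (g %% q)) => //.
  by rewrite -ltnS (leq_trans _ hq) // ltn_modp.
have -> : g %% q = g - (g %/ q) * q by rewrite {2}(divp_eq g q) addrC addKr.
by apply: ann_sub => //; apply: ann_mull.
Qed.

End Ann.
Arguments phi {F}.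
Arguments ann {F}.
Arguments sum_trunc {F}.
Arguments phi_lin {F}.
Arguments phiXn {F}.
Arguments poly_decomp {F}.
Arguments ann_mul {F a h}.
Arguments ann_min {F a h}.
Arguments ann_scale {F a}.

Lemma uniq_map_inj (T1 T2 : eqType) (f : T1 -> T2) (s : seq T1) :
  uniq (map f s) -> {in s &, injective f}.
Proof.
elim: s => [|x s IH] //= /andP [nin us] u v.
rewrite !inE => /orP [/eqP -> | hu] /orP [/eqP -> | hv] // E.
- by move: nin; rewrite E map_f.
- by move: nin; rewrite -E map_f.
- exact: IH.
Qed.

Lemma pow_surj_one (C : fieldType) (rs : seq C) : 0 \notin rs ->
  (forall p, (2 <= p)%N -> forall x, x \in rs -> exists2 y, y \in rs & x = y ^+ p) ->
  forall x, x \in rs -> x = 1.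
Proof.
move=> n0 Hs.
pose S := undup rs.
have US : uniq S by apply: undup_uniq.
have key : forall p, (2 <= p)%N ->
   (S =i map (fun y => y ^+ p) S) /\ {in S &, injective (fun y => y ^+ p)}.
  move=> p hp.
  have sub : {subset S <= map (fun y => y ^+ p) S}.
    move=> x; rewrite mem_undup => /(Hs p hp) [y yin ->].
    by apply: map_f; rewrite mem_undup.
  have hsz : (size (map (fun y => y ^+ p) S) <= size S)%N by rewrite size_map.
  split; first by have [_] := uniq_min_size US sub hsz.
  by apply: uniq_map_inj; apply: (leq_size_uniq US sub hsz).
have memS : forall x, (x \in S) = (x \in rs) by move=> x; rewrite mem_undup.
move=> x xin; have xS : x \in S by rewrite memS.
have x0 : x != 0 by apply: contraNneq n0 => <-.
have powS : forall i, x ^+ i.+1 \in S.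
  case=> [|i]; first by rewrite expr1.
  by have [-> _] := key i.+2 isT; apply: map_f.
pose T := mkseq (fun i => x ^+ i.+1) (size S).+1.
have nU : ~~ uniq T.
  apply/negP => UT.
  have subT : {subset T <= S} by move=> y /mapP [i _ ->]; apply: powS.
  by have := uniq_leq_size UT subT; rewrite size_mkseq ltnn.
have [i [j [lij ljT]]] := uniqPn 0 nU.
have hj : (j < (size S).+1)%N by move: ljT; rewrite size_mkseq.
have hi : (i < (size S).+1)%N by apply: ltn_trans lij hj.
rewrite !nth_mkseq // => Eij.
have r1 : x ^+ (j - i) = 1.
  apply: (mulfI (expf_neq0 i.+1 x0)); rewrite -exprD mulr1.
  have -> : (i.+1 + (j - i) = j.+1)%N by rewrite addSn subnKC // ltnW.
  by rewrite Eij.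
have r0 : (0 < j - i)%N by rewrite subn_gt0.
pose p := ((j - i) * 2)%N.
have hp : (2 <= p)%N by rewrite /p; move: r0; case: (j - i)%N.

have [kS kI] := key p hp.
have xp1 : x ^+ p = 1 by rewrite /p exprM r1 expr1n.
have oneS : 1 \in S by rewrite kS; apply/mapP; exists x.
by apply: kI; rewrite ?xp1 ?expr1n.
Qed.

Lemma poly_nat_roots (C : numDomainType) (Z : {poly C}) :
  (forall n, Z.[n%:R] = 0) -> Z = 0.
Proof.
move=> H; apply/eqP/negPn/negP => nz.
suff : (size (mkseq (fun i => i%:R : C) (size Z)) < size Z)%N by rewrite size_mkseq ltnn.
apply: max_poly_roots nz _ _.
  by apply/allP => x /mapP [i _ ->]; rewrite /root H.
by rewrite map_inj_uniq ?iota_uniq // => i j /eqP; rewrite eqr_nat => /eqP.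
Qed.

Lemma ffact_prod (C : numDomainType) n l :
  \prod_(j < l) (n%:R - j%:R) = (n ^_ l)%:R :> C.
Proof.
elim: l => [|l IH]; first by rewrite big_ord0 ffactn0.
rewrite big_ord_recr /= IH ffactnSr natrM.
case: (leqP l n) => hl; first by rewrite natrB.
by rewrite ffact_small // !mul0r.
Qed.

Section Main.
Variable C : numClosedFieldType.
Variables (a lam : nat -> C).
Hypothesis Hd : forall p, (2 <= p)%N -> lam p != 0 /\ forall n, a (p * n) = lam p * a n.

Lemma dilation p mu h : (2 <= p)%N -> ann a mu -> mu %| h \Po 'X^p -> ann a h.
Proof.
move=> hp Amu /dvdpP [q Eq] n.
have [l0 Hl] := Hd _ hp.
apply: (mulfI l0); rewrite mulr0.
have E0 : phi a ('X^(p * n) * (h \Po 'X^p)) = 0 by rewrite Eq mulrA ann_mul.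
move: E0; rewrite comp_polyE.
have -> : \sum_(i < size h) h`_i *: 'X^p ^+ i = \sum_(i < size h) h`_i *: 'X^(p * i)
  by apply: eq_bigr => i _; rewrite exprM.
rewrite (phi_lin a (p * n) (size h) (fun i => h`_i) (fun i => (p * i)%N)) => E0.
rewrite {1}(poly_decomp h) (phi_lin a n (size h) (fun i => h`_i) (fun i => i)).
rewrite mulr_sumr; rewrite -[RHS]E0; apply: eq_bigr => j _; rewrite -mulnDr Hl mulrCA //.
Qed.

Lemma main_gen (Q : {poly C}) : Q.[0] != 0 -> ann a Q ->
  (forall n, a n = 0) \/ exists k c, forall n, a n = c * (n%:R) ^+ k.
Proof.
move=> Q0 AQ.
have Qn0 : Q != 0 by apply: contraNneq Q0 => ->; rewrite horner0.
have [mu [Amu mun0 mudiv]] := ann_min AQ Qn0.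
have mu0 : mu.[0] != 0.
  have /dvdpP [q Eq] := mudiv Q AQ.
  by apply: contraNneq Q0; rewrite Eq hornerM => ->; rewrite mulr0.
have [rs Ers] := closed_field_poly_normal mu.
have lc0 : lead_coef mu != 0 by rewrite lead_coef_eq0.
have rootmu : forall x, root mu x = (x \in rs).
  by move=> x; rewrite {1}Ers rootZ // root_prod_XsubC.
have n0 : 0 \notin rs by rewrite -rootmu.
have Hs : forall p, (2 <= p)%N -> forall x, x \in rs -> exists2 y, y \in rs & x = y ^+ p.
  move=> p hp x xin.
  pose hp' := \prod_(z <- rs) ('X - (z ^+ p)%:P).
  have dv : mu %| hp' \Po 'X^p.
    rewrite {1}Ers dvdpZl // /hp'.
    elim: (rs) => [|z r IH]; first by rewrite !big_nil comp_polyC dvdpp.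
    rewrite !big_cons comp_polyM; apply: dvdp_mul => //.
    rewrite comp_polyB comp_polyX comp_polyC dvdp_XsubCl /root hornerD hornerN hornerXn hornerC.
    by rewrite subrr.
  have Ah : ann a hp' := @dilation p mu hp' hp Amu dv.
  have : root hp' x.
    by have /dvdpP [q Eq] := mudiv _ Ah; rewrite Eq rootM rootmu xin orbT.
  rewrite /hp' -(big_map (fun z => z ^+ p) predT (fun w => 'X - w%:P)) root_prod_XsubC.
  by move=> /mapP [y yin ->]; exists y.
have all1 := @pow_surj_one _ rs n0 Hs.
have Eprod : \prod_(z <- rs) ('X - z%:P) = ('X - 1) ^+ (size rs).
  elim: (rs) all1 => [|z r IH] H; first by rewrite big_nil expr0.
  rewrite big_cons (H z (mem_head _ _)) IH ?exprS // => y yin.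
  by apply: H; rewrite inE yin orbT.
set r := size rs in Eprod.
have Ar : ann a (('X - 1) ^+ r).
  have := ann_scale (lead_coef mu)^-1 mu Amu.
  by rewrite {2}Ers scalerA mulVf // scale1r Eprod.
pose d l := phi a (('X - 1) ^+ l).
have dz : forall l, (r <= l)%N -> d l = 0.
  by move=> l hl; rewrite /d -(subnK hl) exprD ann_mul.
have an : forall n, a n = \sum_(l < r) 'C(n, l)%:R * d l.
  move=> n; rewrite -(phiXn a n).
  have -> : 'X^n = \sum_(l < n.+1) ('X - 1) ^+ l *+ 'C(n, l) :> {poly C}
    by rewrite -exprD1n subrK.
  rewrite phi_sum.
  transitivity (\sum_(l < n.+1) 'C(n, l)%:R * d l).
    by apply: eq_bigr => l _; rewrite -scaler_nat phiZ.
  rewrite (sum_trunc (fun l => 'C(n, l)%:R * d l) _ _ (leq_addr r n.+1)); last first.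
    by move=> l hl; rewrite bin_small ?mul0r.
  rewrite (sum_trunc (fun l => 'C(n, l)%:R * d l) _ _ (leq_addl n.+1 r)) //.
  by move=> l hl; rewrite dz ?mulr0.
pose P := \sum_(l < r) d l *: ((l`!%:R)^-1 *: \prod_(j < l) ('X - (j%:R)%:P)).
have Pn : forall n, P.[n%:R] = a n.
  move=> n; rewrite an horner_sum; apply: eq_bigr => l _; rewrite !hornerZ horner_prod.
  rewrite (eq_bigr (fun j : 'I_l => n%:R - (j : nat)%:R)) => [|j _]; last by rewrite hornerXsubC.
  rewrite ffact_prod -bin_ffact natrM [_ * l`!%:R]mulrC mulKf; first exact: mulrC.
  by rewrite pnatr_eq0 -lt0n fact_gt0.
have [l2 H2] := Hd _ (leqnn 2).
pose P2 := \poly_(i < size P) (2%:R ^+ i * P`_i).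
have P2n : forall x, P2.[x] = P.[2%:R * x].
  move=> x; rewrite horner_poly horner_coef; apply: eq_bigr => i _.
  by rewrite exprMn; ring.
pose Z := P2 - lam 2 *: P.
have Z0 : Z = 0.
  apply: poly_nat_roots => n.
  by rewrite hornerD hornerN hornerZ P2n -natrM !Pn H2 subrr.
have coefP : forall i, (2%:R ^+ i - lam 2) * P`_i = 0.
  move=> i; have := congr1 (fun q : {poly C} => q`_i) Z0.
  rewrite /= coefB coefZ coef0 coef_poly mulrBl.
  case: ifP => // /negbT; rewrite -leqNgt => hi.
  by rewrite nth_default // !mulr0.
case: (eqVneq P 0) => [P0|Pn0].
  by left => n; rewrite -Pn P0 horner0.
right; set k := (size P).-1.
have ck : P`_k != 0 by rewrite -lead_coefE lead_coef_eq0.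
have lam2 : lam 2 = 2%:R ^+ k.
  have := coefP k; move/eqP; rewrite mulf_eq0 (negbTE ck) orbF subr_eq0.
  by move/eqP.
have Pk : P = P`_k *: 'X^k.
  apply/polyP => i; rewrite coefZ coefXn; case: eqVneq => [->|ne]; rewrite ?mulr1 ?mulr0 //.
  have := coefP i; rewrite lam2 => /eqP; rewrite mulf_eq0 subr_eq0 => /orP [|/eqP //].
  by rewrite -!natrX eqr_nat eqn_exp2l // (negbTE ne).
by exists k, P`_k => n; rewrite -Pn {1}Pk hornerZ hornerXn.
Qed.

End Main.

Section Tay.
Variable R : realType.
Implicit Types A B : {poly R}.

Lemma size_taylor_seq A B n : size (taylor_seq A B n) = n.+1.
Proof. by elim: n => [|n IH] //=; rewrite size_rcons IH. Qed.

Lemma taylor_seqE A B n i : (i <= n)%N -> (taylor_seq A B n)`_i = taylor A B i.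
Proof.
elim: n => [|n IH] hi.
  by move: hi; rewrite leqn0 => /eqP ->.
case: (ltngtP i n.+1) hi => [hi'|hi'|->] hi //.
  by rewrite /= nth_rcons size_taylor_seq hi' IH // -ltnS.
Qed.

Lemma taylorS A B n : taylor A B n.+1 =
  (A`_n.+1 - \sum_(i < n.+1) B`_(n.+1 - i) * taylor A B i) / B`_0.
Proof.
rewrite /taylor /= nth_rcons size_taylor_seq ltnn eqxx.
congr ((_ - _) / _); apply: eq_bigr => i _; rewrite taylor_seqE //.
by rewrite -ltnS.
Qed.

Lemma taylor_rel A B : B`_0 != 0 -> srel A B (taylor A B).
Proof.
move=> B0 [|m].
  by rewrite big_ord1 /taylor /= mulrC divfK.
rewrite big_ord_recl subn0 taylorS mulrC divfK //.
rewrite (reindex_inj rev_ord_inj) /=.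
rewrite [X in _ - X + _](_ : _ = \sum_(i < m.+1) B`_(bump 0 i) * taylor A B (m.+1 - bump 0 i)) ?subrK //.
apply: eq_bigr => j _; rewrite /bump /=.
have hj := ltn_ord j.
have -> : (m.+1 - (m.+1 - j.+1) = 1 + j)%N by lia.
by have -> : (m.+1 - j.+1 = m.+1 - (1 + j))%N by lia.
Qed.

End Tay.

Lemma srel_ext (F : fieldType) (N D : {poly F}) s t :
  (forall n, s n = t n) -> srel N D s -> srel N D t.
Proof. by move=> E H n; rewrite H; apply: eq_bigr => i _; rewrite E. Qed.
Arguments srel_ext {F N D s t}.

Lemma theta_geom_rel (R : realType) k :
  srel (theta_geom R k).1 (theta_geom R k).2 (fun n => (n%:R : R) ^+ k) /\
  exists m, (theta_geom R k).2 = (1 - 'X) ^+ m.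
Proof.
elim: k => [|k [IH [m Em]]].
  split; last by exists 1%N; rewrite expr1.
  by rewrite /theta_geom /=; apply: (srel_ext _ (@srel_geom R)) => n; rewrite expr0.
have -> : theta_geom R k.+1 = theta (theta_geom R k) by []. rewrite /theta /=.
split; last by exists (m * 2)%N; rewrite Em exprM.
by apply: (srel_ext _ (srel_theta IH)) => n; rewrite exprS.
Qed.

Theorem mainTheorem3 (R : realType) (A B : {poly R}) (lambda : nat -> R) :
  B.[0] != 0 -> (size A < size B)%N -> A != 0 ->
  (forall p : nat, (2 <= p)%N ->
     lambda p != 0 /\ forall n : nat, taylor A B (p * n) = lambda p * taylor A B n) ->
  (forall z : R[i], is_pole A B z -> z = 1) /\
  exists (k : nat) (C : R),
    A * (theta_geom R k).2 = C *: ((theta_geom R k).1 * B) /\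
    forall p : nat, (2 <= p)%N -> lambda p = (p ^ k)%:R.
Proof.
move=> B0 hsz A0 Hl.
have B0' : B`_0 != 0 by rewrite -horner_coef0.
set t := taylor A B.
have relAB : srel A B t := @taylor_rel R A B B0'.
have tz : ~ (forall n, t n = 0).
  move=> H; move/negP: A0; apply; apply/eqP/polyP => n.
  by rewrite relAB coef0 big1 // => i _; rewrite H mulr0.
have Bn0 : B != 0 by apply: contraNneq B0 => ->; rewrite horner0.
set d := (size B).-1.
have sB : size B = d.+1 by rewrite prednK // lt0n size_poly_eq0.
pose Q := \poly_(i < size B) B`_(d - i).
have Qrel : forall n, \sum_(j < size B) Q`_j * t (n + j)%N = 0.
  move=> n.
  have : A`_(n + d) = 0.
    by rewrite nth_default // (leq_trans _ (leq_addl _ _)) // -ltnS -sB.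
  rewrite relAB => E; rewrite -[RHS]E.
  rewrite -(sum_trunc (fun i => B`_i * t (n + d - i)%N) (size B) (n + d).+1); first last.
  - by move=> l hl; rewrite nth_default ?mul0r.
  - by rewrite sB ltnS leq_addl.
  rewrite sB (reindex_inj rev_ord_inj) /=; apply: eq_bigr => j _.
  have hj := ltn_ord j.
  rewrite coef_poly sB.
  have -> : (d.+1 - j.+1 < d.+1)%N by lia.
  have -> : (d - (d.+1 - j.+1) = j)%N by lia.
  by have -> : (n + (d.+1 - j.+1) = n + d - j)%N by lia.
have sQ : size Q = size B by rewrite size_poly_eq // sB /= subnn.
pose a n := real_complex R (t n).
pose lamC p := real_complex R (lambda p).
pose QC := map_poly (real_complex R) Q.
have AQ : ann a QC.
  move=> n; rewrite {1}(poly_decomp QC) (phi_lin a n (size QC) (fun i => QC`_i) (fun i => i)).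
  rewrite size_map_poly.
  transitivity (real_complex R (\sum_(j < size Q) Q`_j * t (n + j)%N)); last first.
    by rewrite sQ Qrel rmorph0.
  by rewrite rmorph_sum; apply: eq_bigr => j _; rewrite coef_map rmorphM.
have rcI : injective (real_complex R) := @complexI R.
have QC0 : QC.[0] != 0.
  rewrite horner_coef0 coef_map coef_poly sB /= subn0.
  apply/negP => /eqP H; move: H; rewrite -(rmorph0 (real_complex R)) => /rcI.
  apply/eqP; rewrite -lead_coefE lead_coef_eq0 //.
have Hd : forall p, (2 <= p)%N -> lamC p != 0 /\ forall n, a (p * n)%N = lamC p * a n.
  move=> p hp; have [l0 Hp] := Hl p hp; split.
    by apply/negP => /eqP H; move: H; rewrite /lamC -(rmorph0 (real_complex R)) => /rcI /eqP; apply/negP.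
  by move=> n; rewrite /a /lamC -rmorphM -Hp.
case: (@main_gen _ a lamC Hd QC QC0 AQ) => [a0 | [k [c Hc]]].
  by exfalso; apply: tz => n; apply: rcI; rewrite rmorph0; apply: a0.
have tn : forall n, t n = t 1%N * (n%:R) ^+ k.
  move=> n; apply: rcI; rewrite rmorphM rmorphXn rmorph_nat.
  have h1 := Hc 1%N; rewrite mulr1n expr1n mulr1 in h1.
  by move: (Hc n); rewrite /a in h1 * => ->; rewrite -h1.
have t10 : t 1%N != 0.
  by apply/negP => /eqP H; apply: tz => n; rewrite tn H mul0r.
have [relN [m Dm]] := theta_geom_rel R k.
set N := (theta_geom R k).1 in relN *; set D := (theta_geom R k).2 in relN Dm *.
have hrel : srel A B (fun n => t 1%N * (n%:R) ^+ k) := srel_ext tn relAB.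
have E : A * D = (t 1%N *: N) * B := srel_eq hrel (srel_scale (t 1%N) relN).
split; last first.
  exists k, (t 1%N); split; first by rewrite E -scalerAl.
  move=> p hp; have := (Hl p hp).2 1%N; rewrite muln1 -/t (tn p) => H.
  by apply: (mulIf t10); rewrite -H mulrC natrX.
move=> z; rewrite /is_pole.
set g := gcdp A B.
have g0 : g != 0 by rewrite gcdp_eq0 (negbTE A0).
have cop : coprimep (A %/ g) (B %/ g) by apply: coprimep_div_gcd; rewrite A0.
have EA : A = (A %/ g) * g by rewrite divpK // dvdp_gcdl.
have EB : B = (B %/ g) * g by rewrite divpK // dvdp_gcdr.
have E' : (A %/ g) * D = (t 1%N)%:P * N * (B %/ g).
  apply: (mulIf g0); rewrite mulrAC -EA E -mul_polyC {1}EB; ring.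
have dvd : (B %/ g) %| D.
  have : (B %/ g) %| (A %/ g) * D by rewrite E' dvdp_mull.
  by rewrite Gauss_dvdpr // coprimep_sym.
move=> hz.
have /dvdpP [q Eq] := dvd.
have : root (map_poly (real_complex R) D) z by rewrite Eq rmorphM rootM hz orbT.
rewrite Dm rmorphXn rmorphB rmorph1 /= map_polyX /root horner_exp hornerD hornerN hornerX hornerC.
by rewrite expf_eq0 subr_eq0 => /andP [_ /eqP <-].
Qed.
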